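(* Let $\Phi=(A;\{E_i\}_{i=0}^d;A^*;\{E^*_i\}_{i=0}^d)$ be a tridiagonal system on $V$ with $d\ge1$, such that $(A,A^* )$ satisfies the $q$-Serre relations, with $E_iV$ the eigenspace of $A$ for $\theta_i=q^{2i-d}$ and $E^*_iV$ the eigenspace of $A^*$ for $\theta^*_i=q^{d-2i}$. Let $\{U_i\}_{i=0}^d$ be its split decomposition, $K:V\to V$ the linear map acting on $U_i$ as $q^{d-2i}I$, $t$ a scalar, $B=A$, $B^*=tA^*+(1-t)K$, and $E'_i$ the primitive idempotent of $B^*$ for $\theta^*_i$. Then for $0\le i\le d$, $$B^*E_iV\subseteq E_{i-1}V+E_iV+E_{i+1}V\quad(E_{-1}=E_{d+1}=0),\qquad BE'_iV\subseteq E'_{i-1}V+E'_iV+E'_{i+1}V\quad(E'_{-1}=E'_{d+1}=0).$$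
   Context: $\mathcal K$ is an algebraically closed field; $V$ is a nonzero finite-dimensional vector space over $\mathcal K$; $q\in\mathcal K$ is nonzero and not a root of unity; $[3]_q=q^2+1+q^{-2}$. The $q$-Serre relations for $(X,Y)$: $X^3Y-[3]_qX^2YX+[3]_qXYX^2-YX^3=0$ and $Y^3X-[3]_qY^2XY+[3]_qYXY^2-XY^3=0$. Primitive idempotent of a diagonalizable $X$ for eigenvalue $\lambda_i$: $\prod_{j\ne i}\frac{X-\lambda_jI}{\lambda_i-\lambda_j}$. A tridiagonal system on $V$ is a sequence $(A;\{E_i\}_{i=0}^d;A^*;\{E^*_i\}_{i=0}^d)$ with $A,A^*$ diagonalizable, $\{E_i\}$, $\{E^*_i\}$ orderings of their primitive idempotents, $E_iA^*E_j=0$ and $E^*_iAE^*_j=0$ when $|i-j|>1$, and no subspaces other than $0,V$ invariant under both $A$ and $A^*$. Split decomposition: $U_i=(E^*_0V+\cdots+E^*_iV)\cap(E_iV+\cdots+E_dV)$; known: $V=U_0\oplus\cdots\oplus U_d$, $(A-\theta_iI)U_i\subseteq U_{i+1}$, $(A^*-\theta^*_iI)U_i\subseteq U_{i-1}$ ($U_{-1}=U_{d+1}=0$). It is a fact (proved in the paper) that $B^*$ is diagonalizable with eigenvalues $\theta^*_0,\dots,\theta^*_d$, so $E'_i$ is defined. *)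

(* Defs.v *)
(* Linear maps on V = K^n are n x n matrices acting on ROW
   vectors (v |-> v *m M), subspaces are row spaces (mxalgebra %MS). *)
From HB Require Import structures.
From mathcomp Require Import all_boot all_order all_algebra.
Set Implicit Arguments. Unset Strict Implicit. Unset Printing Implicit Defensive.
Import Order.TTheory GRing.Theory Num.Theory.
Local Open Scope ring_scope.

Definition prim_idem (K : fieldType) (n d : nat) (X : 'M[K]_n)
  (th : 'I_d.+1 -> K) (i : 'I_d.+1) : 'M[K]_n :=
  \prod_(j < d.+1 | j != i) ((th i - th j)^-1 *: (X - (th j)%:M)).

Definition tridiagonal_system (K : fieldType) (n d : nat) (A As : 'M[K]_n)
  (th ths : 'I_d.+1 -> K) (E Es : 'I_d.+1 -> 'M[K]_n) : Prop :=
  [/\ diagonalizable A /\ diagonalizable As,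
      injective th /\ injective ths,
      (forall a, eigenvalue A a <-> exists i, a = th i) /\
      (forall a, eigenvalue As a <-> exists i, a = ths i),
      (forall i, E i = prim_idem A th i) /\ (forall i, Es i = prim_idem As ths i) /\
      (forall i j : 'I_d.+1, ((i.+1 < j)%N || (j.+1 < i)%N) ->
          E i *m As *m E j = 0 /\ Es i *m A *m Es j = 0)
    & (forall W : 'M[K]_n, stablemx W A -> stablemx W As ->
          (W == (0 : 'M[K]_n))%MS \/ (W == (1%:M : 'M[K]_n))%MS)].

Definition q_serre (K : fieldType) (n : nat) (q : K) (X Y : 'M[K]_n) : Prop :=
  let q3 := q ^+ 2 + 1 + q ^- 2 in
  X ^+ 3 *m Y - q3 *: (X ^+ 2 *m Y *m X) + q3 *: (X *m Y *m X ^+ 2) - Y *m X ^+ 3 = 0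
  /\ Y ^+ 3 *m X - q3 *: (Y ^+ 2 *m X *m Y) + q3 *: (Y *m X *m Y ^+ 2) - X *m Y ^+ 3 = 0.

Definition split_comp (K : fieldType) (n d : nat) (E Es : 'I_d.+1 -> 'M[K]_n)
  (i : 'I_d.+1) : 'M[K]_n :=
  ((\sum_(j < d.+1 | (j <= i)%N) Es j) :&: (\sum_(j < d.+1 | (i <= j)%N) E j))%MS.

Definition nbr_sum (K : fieldType) (n d : nat) (E : 'I_d.+1 -> 'M[K]_n)
  (i : 'I_d.+1) : 'M[K]_n :=
  (\sum_(j < d.+1 | (i <= j.+1)%N && (j <= i.+1)%N) E j)%MS.

(* Main.v *)
Require Import Defs.
From HB Require Import structures.
From mathcomp Require Import all_boot all_order all_algebra.
From mathcomp Require Import zify ring.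
Set Implicit Arguments. Unset Strict Implicit. Unset Printing Implicit Defensive.
Import Order.TTheory GRing.Theory Num.Theory.
Local Open Scope ring_scope.

Section Spec.
Variables (F : fieldType) (n' d : nat).
Local Notation n := n'.+1.
Implicit Types (X : 'M[F]_n).

Definition lag (th : 'I_d.+1 -> F) (i : 'I_d.+1) : {poly F} :=
  \prod_(j < d.+1 | j != i) ((th i - th j)^-1 *: ('X - (th j)%:P)).

Lemma prim_idemE X th i : prim_idem X th i = horner_mx X (lag th i).
Proof.
rewrite /prim_idem /lag rmorph_prod; apply: eq_bigr => j _.
by rewrite [RHS]/= horner_mxZ rmorphB /= horner_mx_X horner_mx_C.
Qed.

Lemma horner_eig m (Y : 'M[F]_(m, n)) X a (p : {poly F}) :
  Y *m X = a *: Y -> Y *m horner_mx X p = p.[a] *: Y.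
Proof.
move=> HY; elim/poly_ind: p => [|p c IH].
  by rewrite rmorph0 mulmx0 horner0 scale0r.
rewrite rmorphD rmorphM /= horner_mx_X horner_mx_C hornerMXaddC.
rewrite mulmxDr -mulmxE mulmxA IH -scalemxAl HY scalerA.
by rewrite mul_mx_scalar scalerDl.
Qed.

Lemma lag_eval th (thi : injective th) i k : (lag th i).[th k] = (i == k)%:R.
Proof.
rewrite /lag horner_prod; case: eqP => [<-|/eqP nik].
  rewrite big1 // => j ji; rewrite hornerZ hornerXsubC mulVf // subr_eq0.
  by apply: contra ji => /eqP/thi ->.
by rewrite (bigD1 k) 1?eq_sym //= hornerZ hornerXsubC subrr mulr0 mul0r.
Qed.

Lemma size_lag th i : (size (lag th i) <= d.+1)%N.
Proof.
rewrite /lag scaler_prod; apply: leq_trans (size_scale_leq _ _) _.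
rewrite -big_filter size_prod_XsubC ltnS.
have H : #|predC1 i| = d by rewrite cardC1 card_ord.
apply: (@leq_trans #|predC1 i|); last by rewrite H.
rewrite cardE /enum_mem !size_filter /index_enum; case: index_enum_key => /=.
by [].
Qed.

Lemma sum_lag th (thi : injective th) : \sum_i lag th i = 1.
Proof.
apply/eqP; rewrite -subr_eq0; apply/eqP.
apply: (@roots_geq_poly_eq0 _ _ [seq th k | k <- enum 'I_d.+1]).
- apply/allP => x /mapP [k _ ->]; rewrite /root hornerD hornerN horner_sum hornerC.
  rewrite (bigD1 k) //= lag_eval // eqxx big1 ?addr0 ?subrr //.
  by move=> j /negPf; rewrite lag_eval // => ->.
- by rewrite map_inj_uniq ?enum_uniq.
- rewrite size_map size_enum_ord.
  apply: leq_trans (size_polyD _ _) _; rewrite geq_max size_polyN size_poly1 /=.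
  apply/andP; split=> //; apply: leq_trans (size_sum _ _ _) _.
  apply/bigmax_leqP => i _; exact: size_lag.
Qed.

Lemma sum_prim_idem X (th : 'I_d.+1 -> F) (thi : injective th) :
  \sum_i prim_idem X th i = 1%:M.
Proof.
rewrite (eq_bigr _ (fun i _ => prim_idemE X th i)) -rmorph_sum sum_lag //.
by rewrite rmorph1.
Qed.


Definition mth (th : 'I_d.+1 -> F) : {poly F} := \prod_(k < d.+1) ('X - (th k)%:P).

Lemma mth_root (th : 'I_d.+1 -> F) k : (mth th).[th k] = 0.
Proof.
by rewrite /mth horner_prod (bigD1 k) //= hornerXsubC subrr mul0r.
Qed.

Section WithMin.
Variables (X : 'M[F]_n) (th : 'I_d.+1 -> F).
Hypothesis thi : injective th.
Hypothesis mX : horner_mx X (mth th) = 0.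
Local Notation P := (prim_idem X th).

Lemma XP i : X *m P i = th i *: P i.
Proof.
have E : ('X - (th i)%:P) * lag th i =
   (\prod_(j < d.+1 | j != i) (th i - th j)^-1) *: mth th.
  rewrite /lag scaler_prod -scalerAr; congr (_ *: _).
  by rewrite /mth [RHS](bigD1 i).
apply/eqP; rewrite -subr_eq0; apply/eqP.
have := congr1 (horner_mx X) E.
rewrite rmorphM /= rmorphB /= horner_mx_X horner_mx_C horner_mxZ mX scaler0.
by rewrite -prim_idemE mulrBl -mulmxE mul_scalar_mx.
Qed.

Lemma PX i : P i *m X = th i *: P i.
Proof.
have : comm_mx X (P i) by rewrite prim_idemE; apply: comm_mx_horner.
by rewrite /comm_mx => <-; apply: XP.
Qed.

Lemma PP i j : P i *m P j = (i == j)%:R *: P i.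
Proof. by rewrite [P j]prim_idemE (horner_eig _ (PX i)) lag_eval // eq_sym. Qed.

Lemma PPn i j : i != j -> P i *m P j = 0.
Proof. by move/negPf => h; rewrite PP h scale0r. Qed.

Lemma PPi i : P i *m P i = P i.
Proof. by rewrite PP eqxx scale1r. Qed.

Lemma decomp_mx m (M : 'M[F]_(n, m)) : M = \sum_i (P i *m M).
Proof. by rewrite -mulmx_suml sum_prim_idem // mul1mx. Qed.

Lemma decomp_mxr m (M : 'M[F]_(m, n)) : M = \sum_i (M *m P i).
Proof. by rewrite -mulmx_sumr sum_prim_idem // mulmx1. Qed.

Lemma comp_ext (M N : 'M[F]_n) :
  (forall i j, P i *m M *m P j = P i *m N *m P j) -> M = N.
Proof.
move=> h; rewrite (decomp_mx M) (decomp_mx N); apply: eq_bigr => i _.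
rewrite (decomp_mxr (P i *m M)) (decomp_mxr (P i *m N)).
by apply: eq_bigr => j _; apply: h.
Qed.

Lemma supp_mul0 m (Y : 'M[F]_(m, n)) (S : pred 'I_d.+1) k :
  (Y <= \sum_(j | S j) P j)%MS -> ~~ S k -> Y *m P k = 0.
Proof.
move=> /sub_sumsmxP [u ->] hk; rewrite mulmx_suml big1 // => j Sj.
rewrite -mulmxA PPn ?mulmx0 //; apply: contraNneq hk => <-; exact: Sj.
Qed.

Lemma nbr_sub (M : 'M[F]_n) (i : 'I_d.+1) :
  (forall j : 'I_d.+1, ((i.+1 < j)%N || (j.+1 < i)%N) -> P i *m M *m P j = 0) ->
  (P i *m M <= nbr_sum P i)%MS.
Proof.
move=> h; rewrite (decomp_mxr (P i *m M)) (bigID (fun j : 'I_d.+1 => (i <= j.+1)%N && (j <= i.+1)%N)) /=.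
rewrite [X in _ + X]big1 ?addr0.
  by apply: summx_sub_sums => j _; apply: submxMl.
move=> j; rewrite negb_and -!ltnNge => hj; apply: h.
by rewrite orbC.
Qed.

End WithMin.

Lemma supp_sub_gen (Q : 'I_d.+1 -> 'M[F]_n) (hQ : \sum_i Q i = 1%:M)
  m (Y : 'M[F]_(m, n)) (S : pred 'I_d.+1) :
  (forall k, ~~ S k -> Y *m Q k = 0) -> (Y <= \sum_(k | S k) Q k)%MS.
Proof.
move=> h; rewrite -[Y]mulmx1 -hQ mulmx_sumr (bigID S) /= [X in _ + X]big1 ?addr0.
  by apply: summx_sub_sums => k _; exact: submxMl.
by move=> k /h.
Qed.

Lemma nbr_sub_gen (Q : 'I_d.+1 -> 'M[F]_n) (hQ : \sum_i Q i = 1%:M)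
  (M : 'M[F]_n) (i : 'I_d.+1) :
  (forall j : 'I_d.+1, ((i.+1 < j)%N || (j.+1 < i)%N) -> Q i *m M *m Q j = 0) ->
  (Q i *m M <= nbr_sum Q i)%MS.
Proof.
move=> h; apply: supp_sub_gen => // j; rewrite negb_and -!ltnNge => hj.
by apply: h; rewrite orbC.
Qed.

Lemma sum_kill (I : finType) (W : I -> 'M[F]_n) (M : 'M[F]_n) :
  (\sum_i W i :=: 1%:M)%MS -> (forall i, W i *m M = 0) -> M = 0.
Proof.
move=> hW hk; apply/eqP; rewrite -submx0.
have h1 : (1%:M <= \sum_i W i)%MS by rewrite hW.
have := submxMr M h1; rewrite mul1mx sumsmxMr big1 //.
Qed.


Lemma diag_min (X : 'M[F]_n) (th : 'I_d.+1 -> F) :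
  diagonalizable X -> (forall a, eigenvalue X a -> exists i, a = th i) ->
  horner_mx X (mth th) = 0.
Proof.
move=> /diagonalizablePeigen [rs _ hrs] hev.
rewrite (big_nth 0) big_mkord in hrs.
apply: (sum_kill hrs) => i; set r := rs`_i.
have E : eigenspace X r *m X = r *: eigenspace X r by apply/eigenspaceP.
rewrite (horner_eig _ E).
have [h0|hn] := eqVneq (eigenspace X r) 0; first by rewrite h0 scaler0.
have [k ->] := hev r hn.
by rewrite mth_root scale0r.
Qed.

End Spec.

Lemma qinj (F : fieldType) (q : F) : q != 0 -> (forall m : nat, (0 < m)%N -> q ^+ m != 1) ->
  forall a b : int, q ^ a = q ^ b -> a = b.
Proof.
move=> hq hr a b hab.
have h1 : q ^ (a - b) = 1.
  apply: (mulIf (expfz_neq0 b hq)); rewrite -expfzDr // subrK mul1r //.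
apply/eqP; rewrite -subr_eq0; apply/eqP; move: h1.
case: (a - b) => [[|m]|m] //= h.
- by have := hr m.+1 isT; change (q ^+ m.+1 = 1) in h; rewrite h eqxx.
- have := hr m.+1 isT; change ((q ^+ m.+1)^-1 = 1) in h.
  by move: h => /eqP; rewrite invr_eq1 => /eqP ->; rewrite eqxx.
Qed.

Lemma lin2 (K : fieldType) (V : lmodType K) (x y : V) (a b c d e : K) :
  a = c -> b = d + e -> a *: x + b *: y - (c *: x + d *: y + e *: y) = 0.
Proof. by move=> -> ->; rewrite scalerDl addrA subrr. Qed.

Lemma sandw (K : fieldType) n (P Q M N : 'M[K]_n) (a b : K) :
  P *m (a *: M + b *: N) *m Q = a *: (P *m M *m Q) + b *: (P *m N *m Q).
Proof. by rewrite mulmxDr mulmxDl -!scalemxAr -!scalemxAl. Qed.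

Lemma sandR (K : fieldType) n (I : Type) (P : I -> 'M[K]_n) (c : I -> K) (X M : 'M[K]_n) i j :
  X *m P j = c j *: P j -> P i *m (M *m X) *m P j = c j *: (P i *m M *m P j).
Proof. by move=> h; rewrite mulmxA -mulmxA h -scalemxAr. Qed.
Lemma sandL (K : fieldType) n (I : Type) (P : I -> 'M[K]_n) (c : I -> K) (X M : 'M[K]_n) i j :
  P i *m X = c i *: P i -> P i *m (X *m M) *m P j = c i *: (P i *m M *m P j).
Proof. by move=> h; rewrite mulmxA h -!scalemxAl. Qed.

Section Main.
Variables (K : fieldType) (n' d : nat) (q t : K).
Local Notation n := n'.+1.
Variables (A As Km : 'M[K]_n) (E Es : 'I_d.+1 -> 'M[K]_n).
Local Notation th := (fun i : 'I_d.+1 => q ^ ((2 * i)%:Z - d%:Z)).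
Local Notation ls := (fun i : 'I_d.+1 => q ^ (d%:Z - (2 * i)%:Z)).
Hypothesis hq : q != 0.
Hypothesis hqr : forall m : nat, (0 < m)%N -> q ^+ m != 1.
Hypothesis thi : injective th.
Hypothesis lsi : injective ls.
Hypothesis mA : horner_mx A (mth th) = 0.
Hypothesis mAs : horner_mx As (mth ls) = 0.
Hypothesis hE : forall i, E i = prim_idem A th i.
Hypothesis hEs : forall i, Es i = prim_idem As ls i.
Hypothesis htri : forall i j : 'I_d.+1, ((i.+1 < j)%N || (j.+1 < i)%N) ->
          E i *m As *m E j = 0 /\ Es i *m A *m Es j = 0.
Hypothesis hirr : forall W : 'M[K]_n, stablemx W A -> stablemx W As ->
          (W == (0 : 'M[K]_n))%MS \/ (W == (1%:M : 'M[K]_n))%MS.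
Hypothesis hev0 : eigenvalue As (ls ord0).
Hypothesis hK : forall (i : 'I_d.+1) (v : 'rV[K]_n), (v <= split_comp E Es i)%MS ->
      v *m Km = q ^ (d%:Z - (2 * i)%:Z) *: v.

Lemma EA i : E i *m A = th i *: E i. Proof. by rewrite hE PX. Qed.
Lemma AE i : A *m E i = th i *: E i. Proof. by rewrite hE XP. Qed.
Lemma EsAs i : Es i *m As = ls i *: Es i. Proof. by rewrite hEs PX. Qed.
Lemma AsEs i : As *m Es i = ls i *: Es i. Proof. by rewrite hEs XP. Qed.
Lemma sumE : \sum_i E i = 1%:M.
Proof. by rewrite (eq_bigr _ (fun i _ => hE i)) sum_prim_idem. Qed.
Lemma sumEs : \sum_i Es i = 1%:M.
Proof. by rewrite (eq_bigr _ (fun i _ => hEs i)) sum_prim_idem. Qed.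
Lemma EEn i j : i != j -> E i *m E j = 0. Proof. by rewrite !hE; apply: PPn. Qed.
Lemma EsEsn i j : i != j -> Es i *m Es j = 0. Proof. by rewrite !hEs; apply: PPn. Qed.

Lemma suppE m (Y : 'M[K]_(m, n)) (S : pred 'I_d.+1) k :
  (Y <= \sum_(j | S j) E j)%MS -> ~~ S k -> Y *m E k = 0.
Proof.
move=> h; rewrite hE; apply: (supp_mul0 thi mA) => //.
by under eq_bigr => j _ do rewrite -hE.
Qed.
Lemma suppEs m (Y : 'M[K]_(m, n)) (S : pred 'I_d.+1) k :
  (Y <= \sum_(j | S j) Es j)%MS -> ~~ S k -> Y *m Es k = 0.
Proof.
move=> h; rewrite hEs; apply: (supp_mul0 lsi mAs) => //.
by under eq_bigr => j _ do rewrite -hEs.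
Qed.

Definition T (k : nat) : 'M[K]_n :=
  ((\sum_(j < d.+1 | (j <= k)%N) Es j) :&: (\sum_(j < d.+1 | (k <= j)%N) E j))%MS.

Lemma up (i : 'I_d.+1) : (T i *m (A - (th i)%:M) <= T i.+1)%MS.
Proof.
set Y := T i.
have Y1 : (Y <= \sum_(j < d.+1 | (j <= i)%N) Es j)%MS by apply: capmxSl.
have Y2 : (Y <= \sum_(j < d.+1 | (i <= j)%N) E j)%MS by apply: capmxSr.
rewrite sub_capmx; apply/andP; split.
  apply: (supp_sub_gen sumEs) => k; rewrite -ltnNge => hk.
  rewrite -mulmxA mulmxBl mul_scalar_mx mulmxBr -scalemxAr (suppEs Y1) ?scaler0 ?subr0;
    last by rewrite -ltnNge ltnW.
  rewrite -[Y]mulmx1 -sumEs mulmx_sumr !mulmx_suml big1 // => j _.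
  have [hj|hj] := leqP j i.
    rewrite -mulmxA; have -> : Es j *m (A *m Es k) = 0.
      have hjk : (j.+1 < k)%N || (k.+1 < j)%N by apply/orP; left; lia.
      by rewrite mulmxA (proj2 (htri hjk)).
    by rewrite mulmx0.
  by rewrite (suppEs Y1) ?mul0mx // -ltnNge.
apply: (supp_sub_gen sumE) => k; rewrite -ltnNge ltnS => hk.
rewrite -mulmxA mulmxBl AE mul_scalar_mx -scalerBl -scalemxAr.
have [->|hki] := eqVneq k i; first by rewrite subrr scale0r.
rewrite (suppE Y2) ?scaler0 // -ltnNge ltn_neqAle hk andbT.
by rewrite -(inj_eq val_inj) in hki.
Qed.

Definition Dn (k : nat) : 'M[K]_n :=
  ((\sum_(j < d.+1 | (j.+1 <= k)%N) Es j) :&: (\sum_(j < d.+1 | (k <= j.+1)%N) E j))%MS.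

Lemma down (i : 'I_d.+1) : (T i *m (As - (ls i)%:M) <= Dn i)%MS.
Proof.
set Y := T i.
have Y1 : (Y <= \sum_(j < d.+1 | (j <= i)%N) Es j)%MS by apply: capmxSl.
have Y2 : (Y <= \sum_(j < d.+1 | (i <= j)%N) E j)%MS by apply: capmxSr.
rewrite sub_capmx; apply/andP; split.
  apply: (supp_sub_gen sumEs) => k; rewrite -leqNgt => hk.
  rewrite -mulmxA mulmxBl AsEs mul_scalar_mx -scalerBl -scalemxAr.
  have [->|hki] := eqVneq k i; first by rewrite subrr scale0r.
  rewrite (suppEs Y1) ?scaler0 // -ltnNge ltn_neqAle hk andbT eq_sym.
  by rewrite -(inj_eq val_inj) in hki.
apply: (supp_sub_gen sumE) => k; rewrite -ltnNge => hk.
rewrite -mulmxA mulmxBl mul_scalar_mx mulmxBr -scalemxAr (suppE Y2) ?scaler0 ?subr0;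
  last by rewrite -ltnNge; lia.
rewrite -[Y]mulmx1 -sumE mulmx_sumr !mulmx_suml big1 // => j _.
have [hj|hj] := leqP i j.
  rewrite -mulmxA; have -> : E j *m (As *m E k) = 0.
    have hjk : (j.+1 < k)%N || (k.+1 < j)%N by apply/orP; right; lia.
    by rewrite mulmxA (proj1 (htri hjk)).
  by rewrite mulmx0.
by rewrite (suppE Y2) ?mul0mx // -ltnNge.
Qed.

Lemma TW (k : nat) : (T k <= \sum_(i < d.+1) T i)%MS.
Proof.
have [hk|hk] := leqP k d.
  by apply: (sumsmx_sup (inord k)) => //; rewrite inordK.
rewrite /T [X in (_ :&: X)%MS]big_pred0; first by rewrite capmx0 sub0mx.
by move=> j /=; apply/negbTE; rewrite -ltnNge; apply: leq_trans hk.
Qed.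

Lemma DnW (k : nat) : (Dn k <= \sum_(i < d.+1) T i)%MS.
Proof.
case: k => [|k].
  by rewrite /Dn big_pred0 // cap0mx sub0mx.
have -> : Dn k.+1 = T k.
  by rewrite /Dn /T; congr (_ :&: _)%MS; apply: eq_bigl.
exact: TW.
Qed.

Lemma Wfull : (\sum_(i < d.+1) T i :=: 1%:M)%MS.
Proof.
have sA : stablemx (\sum_(i < d.+1) T i) A.
  rewrite sumsmxMr; apply/sumsmx_subP => i _.
  have -> : T i *m A = T i *m (A - (th i)%:M) + th i *: T i.
    by rewrite mulmxBr mul_mx_scalar subrK.
  apply: addmx_sub; first by apply: submx_trans (up i) (TW _).
  by apply: scalemx_sub; apply: TW.
have sAs : stablemx (\sum_(i < d.+1) T i) As.
  rewrite sumsmxMr; apply/sumsmx_subP => i _.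
  have -> : T i *m As = T i *m (As - (ls i)%:M) + ls i *: T i.
    by rewrite mulmxBr mul_mx_scalar subrK.
  apply: addmx_sub; first by apply: submx_trans (down i) (DnW _).
  by apply: scalemx_sub; apply: TW.
case: (hirr sA sAs) => [h0|h1]; last by apply/eqmxP.
exfalso; move: hev0; rewrite /eigenvalue; set V := eigenspace _ _ => hV.
have VAs : V *m As = ls ord0 *: V by apply/eigenspaceP.
have VE : V *m Es ord0 = V.
  by rewrite hEs prim_idemE (horner_eig _ VAs) lag_eval // eqxx scale1r.
have VT : (V <= T 0)%MS.
  rewrite sub_capmx; apply/andP; split.
    rewrite -VE; apply: submx_trans (submxMl _ _) _.
    by apply: (sumsmx_sup ord0).
  by apply: (supp_sub_gen sumE) => k; rewrite leq0n.
have := submx_trans VT (TW 0); move/eqmxP: h0 => ->.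
by rewrite submx0 (negbTE hV).
Qed.

Lemma KT (k : nat) m (Y : 'M[K]_(m, n)) : (Y <= T k)%MS ->
  Y *m Km = q ^ (d%:Z - (2 * k)%:Z) *: Y.
Proof.
move=> hY; have [hk|hk] := leqP k d.
  apply/row_matrixP => r; rewrite row_mul linearZ /=.
  have := @hK (inord k) (row r Y); rewrite /split_comp !inordK //; apply.
  exact: submx_trans (row_sub r Y) hY.
have : (Y <= (0 : 'M[K]_n))%MS.
  apply: submx_trans hY _; rewrite /T [X in (_ :&: X)%MS]big_pred0.
    by rewrite capmx0.
  by move=> j /=; apply/negbTE; rewrite -ltnNge; apply: leq_trans hk.
by rewrite submx0 => /eqP ->; rewrite mul0mx scaler0.
Qed.

Lemma KDn (k : nat) m (Y : 'M[K]_(m, n)) : (Y <= Dn k)%MS ->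
  Y *m Km = q ^ (d%:Z - (2 * k)%:Z + 2) *: Y.
Proof.
case: k => [|k] hY.
  move: hY; rewrite /Dn big_pred0 // cap0mx submx0 => /eqP ->.
  by rewrite mul0mx scaler0.
have -> : q ^ (d%:Z - (2 * k.+1)%:Z + 2) = q ^ (d%:Z - (2 * k)%:Z).
  by congr (q ^ _); lia.
apply: KT; move: hY; have -> // : Dn k.+1 = T k.
by rewrite /Dn /T; congr (_ :&: _)%MS; apply: eq_bigl.
Qed.

Lemma thls (i : 'I_d.+1) : th i * ls i = 1.
Proof. by rewrite /= -expfzDr // (_ : _ + _ = 0) ?expr0z //; lia. Qed.

Lemma K1 : A *m Km = q ^ (-2) *: (Km *m A) + (1 - q ^ (-2)) *: 1%:M.
Proof.
apply/eqP; rewrite -subr_eq0; apply/eqP; apply: (sum_kill Wfull) => i.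
set Y := T i; set Wd := Y *m (A - (th i)%:M).
have hY : Y *m Km = ls i *: Y by apply: KT.
have hW : Wd *m Km = q ^ (d%:Z - (2 * i.+1)%:Z) *: Wd by apply: KT; apply: up.
have hYA : Y *m A = Wd + th i *: Y by rewrite /Wd mulmxBr mul_mx_scalar subrK.
rewrite mulmxBr mulmxDr mulmxA hYA mulmxDl hW -scalemxAl hY.
rewrite -!scalemxAr mulmxA hY -scalemxAl hYA mulmx1.
rewrite !scalerA scalerDr !scalerA.
apply: lin2.
  by rewrite /= -expfzDr //; congr (q ^ _); lia.
have := thls i; rewrite /= => h.
by rewrite -mulrA [_ * q ^ ((2 * i)%:Z - d%:Z)]mulrC h mulr1 addrC subrK.
Qed.

Lemma K2 : As *m Km = q ^ 2 *: (Km *m As) + (1 - q ^ 2) *: (Km *m Km).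
Proof.
apply/eqP; rewrite -subr_eq0; apply/eqP; apply: (sum_kill Wfull) => i.
set Y := T i; set Wu := Y *m (As - (ls i)%:M).
have hY : Y *m Km = ls i *: Y by apply: KT.
have hW : Wu *m Km = q ^ (d%:Z - (2 * i)%:Z + 2) *: Wu by apply: KDn; apply: down.
have hYA : Y *m As = Wu + ls i *: Y by rewrite /Wu mulmxBr mul_mx_scalar subrK.
rewrite mulmxBr mulmxDr mulmxA hYA mulmxDl hW -scalemxAl hY.
rewrite -!scalemxAr mulmxA hY -scalemxAl hYA mulmxA hY -scalemxAl hY.
rewrite !scalerA scalerDr !scalerA.
apply: lin2.
  by rewrite /= -expfzDr //; congr (q ^ _); lia.
ring.
Qed.

Lemma qne (a b : int) : a != b -> q ^ a != q ^ b.
Proof. by apply: contraNneq => /(qinj hq hqr) ->. Qed.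

Lemma mKm : horner_mx Km (mth ls) = 0.
Proof.
apply: (sum_kill Wfull) => i.
have hY : T i *m Km = ls i *: T i by apply: KT.
by rewrite (horner_eig _ hY) mth_root scale0r.
Qed.

Local Notation F := (prim_idem Km ls).

Lemma FK i : F i *m Km = ls i *: F i. Proof. exact: PX mKm i. Qed.
Lemma KF i : Km *m F i = ls i *: F i. Proof. exact: XP mKm i. Qed.

Lemma sand_KR (M : 'M[K]_n) i j : F i *m (M *m Km) *m F j = ls j *: (F i *m M *m F j).
Proof. by rewrite mulmxA -mulmxA KF -scalemxAr. Qed.
Lemma sand_KL (M : 'M[K]_n) i j : F i *m (Km *m M) *m F j = ls i *: (F i *m M *m F j).
Proof. by rewrite mulmxA FK -!scalemxAl. Qed.

Lemma FKF i j : F i *m Km *m F j = ls j *: (F i *m F j).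
Proof. by rewrite -mulmxA KF -scalemxAr. Qed.

Lemma F1eq i j : (ls j - q ^ (-2) * ls i) *: (F i *m A *m F j)
   = (1 - q ^ (-2)) *: (F i *m F j).
Proof.
have := congr1 (fun M => F i *m M *m F j) K1; rewrite /= sandw sand_KR sand_KL.
move=> h; rewrite scalerBl h mulmx1 scalerA [X in X - _]addrC addrK.
by [].
Qed.

Lemma F2eq i j : (ls j - q ^ 2 * ls i) *: (F i *m As *m F j)
   = ((1 - q ^ 2) * (ls i * ls j)) *: (F i *m F j).
Proof.
have := congr1 (fun M => F i *m M *m F j) K2; rewrite /= sandw sand_KR !sand_KL.
rewrite FKF => h; rewrite scalerBl h !scalerA [X in X - _]addrC addrK.
by congr (_ *: _); ring.
Qed.

Lemma q2ne : 1 - q ^ (-2) != 0.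
Proof. by rewrite subr_eq0 eq_sym -(expr0z q) qne. Qed.
Lemma q2ne' : 1 - q ^ 2 != 0.
Proof. by rewrite subr_eq0 eq_sym -(expr0z q) qne. Qed.
Lemma lsne i : ls i != 0. Proof. exact: expfz_neq0. Qed.

Lemma F1off (i j : 'I_d.+1) : j != i -> (j : nat) != i.+1 -> F i *m A *m F j = 0.
Proof.
move=> hji hj1; have := F1eq i j; rewrite (PPn lsi mKm) 1?eq_sym // scaler0.
move/eqP; rewrite scaler_eq0 => /orP [|/eqP //].
rewrite subr_eq0 /= -expfzDr // => /eqP /(qinj hq hqr) h.
by exfalso; move/eqP: hj1; apply; lia.
Qed.

Lemma F1diag i : F i *m A *m F i = th i *: F i.
Proof.
have := F1eq i i; rewrite (PPi lsi mKm) -{1}[ls i]mul1r -mulrBl -scalerA => /(scalerI q2ne).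
move/(congr1 (fun M => th i *: M)); rewrite scalerA thls scale1r => ->.
by [].
Qed.

Lemma F2off (i j : 'I_d.+1) : j != i -> (j.+1 != i)%N -> F i *m As *m F j = 0.
Proof.
move=> hji hj1; have := F2eq i j; rewrite (PPn lsi mKm) 1?eq_sym // scaler0.
move/eqP; rewrite scaler_eq0 => /orP [|/eqP //].
rewrite subr_eq0 /= -expfzDr // => /eqP /(qinj hq hqr) h.
by exfalso; move/eqP: hj1; apply; lia.
Qed.

Lemma F2diag i : F i *m As *m F i = ls i *: F i.
Proof.
have := F2eq i i; rewrite (PPi lsi mKm) -{1}[ls i]mul1r -mulrBl -!scalerA.
by move=> /(scalerI q2ne') /(scalerI (lsne i)).
Qed.

Lemma EKE (i j : 'I_d.+1) : (i.+1 < j)%N || (j.+1 < i)%N -> E i *m Km *m E j = 0.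
Proof.
move=> hj.
have hij : i != j by apply: contraTneq hj => ->; rewrite !ltnNge !leqnSn.
have := congr1 (fun M => E i *m M *m E j) K1; rewrite /= sandw mulmx1 EEn // scaler0 addr0.
rewrite (sandL _ _ (EA i)) (sandR _ _ (AE j)) scalerA => /eqP.
rewrite -subr_eq0 -scalerBl scaler_eq0 => /orP [|/eqP //].
rewrite subr_eq0 /= -expfzDr // => /eqP /(qinj hq hqr) h.
by exfalso; move: hj; lia.
Qed.

Lemma claim1 (i : 'I_d.+1) : (E i *m (t *: As + (1 - t) *: Km) <= nbr_sum E i)%MS.
Proof.
apply: (nbr_sub_gen sumE) => j hj.
by rewrite sandw (proj1 (htri hj)) EKE // !scaler0 addr0.
Qed.

Lemma Fsum_l (c : 'I_d.+1 -> K) i : F i *m (\sum_k c k *: F k) = c i *: F i.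
Proof.
rewrite mulmx_sumr (bigD1 i) //= big1 ?addr0 => [|k hk].
  by rewrite -scalemxAr (PPi lsi mKm).
by rewrite -scalemxAr (PPn lsi mKm) 1?eq_sym // scaler0.
Qed.

Lemma Fsum_r (c : 'I_d.+1 -> K) j : (\sum_k c k *: F k) *m F j = c j *: F j.
Proof.
rewrite mulmx_suml (bigD1 j) //= big1 ?addr0 => [|k hk].
  by rewrite -scalemxAl (PPi lsi mKm).
by rewrite -scalemxAl (PPn lsi mKm) // scaler0.
Qed.

Lemma claim2_t0 (i : 'I_d.+1) : (F i *m A <= nbr_sum F i)%MS.
Proof.
apply: (nbr_sub_gen (sum_prim_idem _ lsi)) => j hj.
apply: F1off; first by apply: contraTneq hj => ->; rewrite !ltnNge !leqnSn.
by apply: contraTneq hj => ->; rewrite ltnn /= ltnNge ltnW.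
Qed.

Local Notation H := (\sum_k th k *: F k).

Lemma HK : H *m Km = 1%:M.
Proof.
rewrite mulmx_suml -(sum_prim_idem Km lsi); apply: eq_bigr => i _.
by rewrite -scalemxAl FK scalerA thls scale1r.
Qed.
Lemma KH : Km *m H = 1%:M.
Proof.
rewrite mulmx_sumr -(sum_prim_idem Km lsi); apply: eq_bigr => i _.
by rewrite -scalemxAr KF scalerA thls scale1r.
Qed.

Lemma K3 : H *m As = q ^ 2 *: (As *m H) + (1 - q ^ 2) *: 1%:M.
Proof.
have e1 : H *m (As *m Km) *m H = H *m As.
  by rewrite !mulmxA -[_ *m Km *m H]mulmxA KH mulmx1.
have e2 : H *m (Km *m As) *m H = As *m H by rewrite !mulmxA HK mul1mx.
have e3 : H *m (Km *m Km) *m H = 1%:M by rewrite !mulmxA HK mul1mx KH.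
by have := congr1 (fun M => H *m M *m H) K2; rewrite /= sandw e1 e2 e3.
Qed.

Lemma EsHEs (i j : 'I_d.+1) : (i.+1 < j)%N || (j.+1 < i)%N -> Es i *m H *m Es j = 0.
Proof.
move=> hj.
have hij : i != j by apply: contraTneq hj => ->; rewrite !ltnNge !leqnSn.
have := congr1 (fun M => Es i *m M *m Es j) K3; rewrite /= sandw mulmx1 EsEsn // scaler0 addr0.
rewrite (sandR _ _ (AsEs j)) (sandL _ _ (EsAs i)) scalerA => /eqP.
rewrite -subr_eq0 -scalerBl scaler_eq0 => /orP [|/eqP ->] //.
rewrite subr_eq0 /= -expfzDr // => /eqP /(qinj hq hqr) h.
by exfalso; move: hj; lia.
Qed.

Section Tnz.
Hypothesis ht : t != 0.
Local Notation G := (\sum_(k < d.+1) (t ^+ k)^-1 *: F k).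
Local Notation G' := (\sum_(k < d.+1) t ^+ k *: F k).

Lemma GG' : G *m G' = 1%:M.
Proof.
rewrite mulmx_suml -(sum_prim_idem Km lsi); apply: eq_bigr => i _.
by rewrite -scalemxAl Fsum_l scalerA mulVf ?scale1r // expf_neq0.
Qed.

Lemma sandG i j (M : 'M[K]_n) : F i *m (G' *m M *m G) *m F j
   = (t ^+ i * (t ^+ j)^-1) *: (F i *m M *m F j).
Proof.
rewrite !mulmxA Fsum_l -!scalemxAl -!mulmxA Fsum_r -!scalemxAr scalerA.
by rewrite !mulmxA.
Qed.

Lemma sandG2 i j (M : 'M[K]_n) : F i *m (G *m M *m G') *m F j
   = ((t ^+ i)^-1 * t ^+ j) *: (F i *m M *m F j).
Proof.
rewrite !mulmxA Fsum_l -!scalemxAl -!mulmxA Fsum_r -!scalemxAr scalerA.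
by rewrite !mulmxA.
Qed.

Lemma conj1 : G' *m As *m G = t *: As + (1 - t) *: Km.
Proof.
apply: (@comp_ext _ _ _ Km _ lsi) => i j; rewrite sandG sandw FKF.
have [->|hji] := eqVneq j i.
  rewrite F2diag (PPi lsi mKm) mulfV ?expf_neq0 // scale1r !scalerA -scalerDl.
  by congr (_ *: _); ring.
rewrite (PPn lsi mKm) 1?eq_sym // !scaler0 addr0.
have [hj1|hj1] := eqVneq j.+1 i.
  by congr (_ *: _); rewrite -hj1 exprS mulfK // expf_neq0.
by rewrite F2off // !scaler0.
Qed.

Lemma conj2 : G *m A *m G' = t *: A + (1 - t) *: H.
Proof.
apply: (@comp_ext _ _ _ Km _ lsi) => i j; rewrite sandG2 sandw.
rewrite -[F i *m H *m F j]mulmxA Fsum_r -scalemxAr.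
have [->|hji] := eqVneq j i.
  rewrite F1diag (PPi lsi mKm) mulVf ?expf_neq0 // scale1r !scalerA -scalerDl.
  by congr (_ *: _); ring.
rewrite (PPn lsi mKm) 1?eq_sym // !scaler0 addr0.
have [hj1|hj1] := eqVneq (j : nat) i.+1.
  by congr (_ *: _); rewrite hj1 exprS mulrCA mulVf ?mulr1 // expf_neq0.
by rewrite F1off // !scaler0.
Qed.

Lemma EpE i : prim_idem (t *: As + (1 - t) *: Km) ls i = G' *m Es i *m G.
Proof.
have [uG uG'] := mulmx1_unit GG'.
have iG : invmx G = G'.
  by rewrite -[G']mul1mx -(mulVmx uG) -mulmxA GG' mulmx1.
rewrite -conj1 -iG prim_idemE horner_mx_uconjC // hEs prim_idemE //.
Qed.

Lemma claim2 (i : 'I_d.+1) :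
  (prim_idem (t *: As + (1 - t) *: Km) ls i *m A <=
     nbr_sum (prim_idem (t *: As + (1 - t) *: Km) ls) i)%MS.
Proof.
apply: (nbr_sub_gen (sum_prim_idem _ lsi)) => j hj.
rewrite !EpE.
have -> : G' *m Es i *m G *m A *m (G' *m Es j *m G)
   = G' *m (Es i *m (G *m A *m G') *m Es j) *m G.
  by rewrite !mulmxA.
by rewrite conj2 sandw (proj2 (htri hj)) EsHEs // !scaler0 addr0 mulmx0 mul0mx.
Qed.

End Tnz.

End Main.

Unset Implicit Arguments.

Theorem lemma7p13 (K : closedFieldType) (n d : nat) (q t : K)
  (A As Kmat : 'M[K]_n) (E Es : 'I_d.+1 -> 'M[K]_n) :
  (0 < n)%N -> (1 <= d)%N ->
  q != 0 -> (forall m : nat, (0 < m)%N -> q ^+ m != 1) ->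
  tridiagonal_system A As (fun i : 'I_d.+1 => q ^ ((2 * i)%:Z - d%:Z))
    (fun i : 'I_d.+1 => q ^ (d%:Z - (2 * i)%:Z)) E Es ->
  q_serre q A As ->
  (forall (i : 'I_d.+1) (v : 'rV[K]_n), (v <= split_comp E Es i)%MS ->
      v *m Kmat = q ^ (d%:Z - (2 * i)%:Z) *: v) ->
  let B := A in
  let Bs := t *: As + (1 - t) *: Kmat in
  let Ep := prim_idem Bs (fun i : 'I_d.+1 => q ^ (d%:Z - (2 * i)%:Z)) in
  forall i : 'I_d.+1,
    (E i *m Bs <= nbr_sum E i)%MS /\ (Ep i *m B <= nbr_sum Ep i)%MS.
Proof.
case: n A As Kmat E Es => [|n'] A As Km E Es hn; first by [].
move=> hd hq hqr [[dA dAs] [thi lsi] [evA evAs] [hE [hEs htri]] hirr] _ hK B Bs Ep i.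
have mA := diag_min dA (fun a h => proj1 (evA a) h).
have mAs := diag_min dAs (fun a h => proj1 (evAs a) h).
have hev0 : eigenvalue As ((fun i : 'I_d.+1 => q ^ (d%:Z - (2 * i)%:Z)) ord0).
  by apply/(proj2 (evAs _)); exists ord0.
split.
  exact: (claim1 t hq hqr thi lsi mA mAs hE hEs htri hirr hev0 hK i).
have [t0|tn0] := eqVneq t 0.
  rewrite /Ep /Bs /B t0 scale0r add0r subr0 scale1r.
  exact: (claim2_t0 hq hqr thi lsi mA mAs hE hEs htri hirr hev0 hK i).
exact: (claim2 hq hqr thi lsi mA mAs hE hEs htri hirr hev0 hK tn0 i).
Qed.
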